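(* Let $G$ be a finite $\pi$-separable group. The following are pairwise equivalent: (1) Each $\pi$-element $x\in G$ has $|x^G|$ either a $\pi$-number or a $\pi'$-number. (2) Either $G$ is $\pi$-decomposable, or $G$ has abelian Hall $\pi$-subgroups and $\pi$-length at most $1$. (3) Either $|x^G|$ is a $\pi$-number for all $\pi$-elements $x\in G$, or $|x^G|$ is a $\pi'$-number for all $\pi$-elements $x\in G$.
   Context: $\pi$ is a set of primes; $|x^G|=|G:C_G(x)|$; a group is $\pi$-decomposable if $G=O_\pi(G)\times O_{\pi'}(G)$. *)

(* Defs.v *)
From mathcomp Require Import all_boot all_fingroup all_solvable.
Set Implicit Arguments. Unset Strict Implicit. Unset Printing Implicit Defensive.
Local Open Scope group_scope.

Definition pi_series (gT : finGroupType) (pi : nat_pred) (G : {group gT})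
    (n : nat) (f : nat -> {group gT}) : Prop :=
  [/\ f 0 = 1%G, f n = G &
      forall i, i < n ->
        [/\ f i <| G, f i \subset f i.+1 &
            pi.-group (f i.+1 / f i) || pi^'.-group (f i.+1 / f i)]].

Definition pi_separable (gT : finGroupType) (pi : nat_pred) (G : {group gT}) :=
  exists n f, @pi_series gT pi G n f.

(* pi-length of G is at most k: some pi-series of G has at most k factors
   that are (nontrivial) pi-groups, i.e. not pi'-groups. *)
Definition pi_length_le (gT : finGroupType) (pi : nat_pred) (G : {group gT})
    (k : nat) :=
  exists n f, @pi_series gT pi G n f /\
    count (fun i => ~~ pi^'.-group (f i.+1 / f i)) (iota 0 n) <= k.

Definition pi_decomposable (gT : finGroupType) (pi : nat_pred) (G : {group gT}) :=
  'O_pi(G) \x 'O_pi^'(G) = G.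

(* Main.v *)
Require Import Defs.
From mathcomp Require Import all_boot all_fingroup all_solvable.
From mathcomp Require Import zify.
Set Implicit Arguments. Unset Strict Implicit. Unset Printing Implicit Defensive.
Local Open Scope group_scope.

Lemma qgroup_nat (gT : finGroupType) (rho : nat_pred) (A B : {group gT}) :
  A \subset 'N(B) -> rho.-group (A / B) = rho.-nat #|A : B|.
Proof. by move=> nBA; rewrite /pgroup card_quotient. Qed.

Section Sep.
Variables (gT : finGroupType) (pi : nat_pred).
Implicit Types G H K N V : {group gT}.


Lemma series_subG G n f : pi_series pi G n f -> forall i, i <= n -> f i \subset G.
Proof.
case=> f0 fn fS i; rewrite leq_eqVlt; case/orP=> [/eqP-> | lt_in].
  by rewrite fn.
by case: (fS i lt_in) => /andP[].
Qed.

Lemma series_norm G n f : pi_series pi G n f -> forall i, i < n ->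
  f i.+1 \subset 'N(f i).
Proof.
move=> sf i lt_in; have [_ _ fS] := sf; have [/andP[_ nG] _ _] := fS i lt_in.
exact: subset_trans (series_subG sf lt_in) nG.
Qed.

Lemma sep_sub G H : pi_separable pi G -> H \subset G -> pi_separable pi H.
Proof.
rewrite /pi_separable; case=> n [f sf] sHG; have [f0 fn fS] := sf.
exists n, (fun i => (f i :&: H)%G); split.
- by apply: val_inj; rewrite /= f0; apply/setIidPl; apply: sub1G.
- by apply: val_inj; rewrite /= fn; apply/setIidPr.
move=> i lt_in; have [nG sfi pq] := fS i lt_in.
have nH: f i :&: H <| H by rewrite setIC; exact: normalGI sHG nG.
split => //; first by rewrite setSI.
have nfi: f i.+1 :&: H \subset 'N(f i :&: H).
  by rewrite (subset_trans (subsetIr _ _)) ?normal_norm.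
have nf := series_norm sf lt_in.
rewrite !qgroup_nat //.
have d: #|f i.+1 :&: H : f i :&: H| %| #|f i.+1 : f i|.
  have ->: f i :&: H = (f i.+1 :&: H) :&: f i.
    by rewrite -setIA (setIC H) setIA (setIidPr sfi).
  rewrite indexgI -card_quotient; last exact: subset_trans (subsetIl _ _) nf.
  by rewrite -card_quotient // cardSg // quotientS // subsetIl.
by rewrite !qgroup_nat // in pq; case/orP: pq => pq; [apply/orP; left | apply/orP; right]; exact: pnat_dvd d pq.
Qed.

Lemma sep_quo G N : pi_separable pi G -> N <| G -> pi_separable pi (G / N).
Proof.
rewrite /pi_separable; case=> n [f sf] nsNG; have [f0 fn fS] := sf.
exists n, (fun i => (f i / N)%G); split.
- by apply: val_inj; rewrite /= f0 /= quotient1.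
- by apply: val_inj; rewrite /= fn.
move=> i lt_in; have [nG sfi pq] := fS i lt_in.
have nq: f i / N <| G / N by apply: quotient_normal.
split => //=; first exact: quotientS.
have nf := series_norm sf lt_in.
have nq2: f i.+1 / N \subset 'N(f i / N).
  exact: subset_trans (quotientS _ (series_subG sf lt_in)) (normal_norm nq).
rewrite !qgroup_nat //.
have d: #|f i.+1 / N : f i / N| %| #|f i.+1 : f i|.
  apply: index_quotient; apply: subset_trans (subsetIl _ _) _.
  exact: subset_trans (series_subG sf lt_in) (normal_norm nsNG).
by rewrite !qgroup_nat // in pq; case/orP: pq => pq; [apply/orP; left | apply/orP; right]; exact: pnat_dvd d pq.
Qed.

Lemma sep_neg G : pi_separable pi G -> pi_separable pi^' G.
Proof.
rewrite /pi_separable; case=> n [f [f0 fn fS]]; exists n, f; split => // i lt_in.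
have [nG sfi pq] := fS i lt_in; split => //.
by rewrite pgroupNK orbC.
Qed.

Lemma sep_min G : pi_separable pi G -> G :!=: 1 ->
  exists2 V : {group gT}, V <| G /\ V :!=: 1 & pi.-group V || pi^'.-group V.
Proof.
rewrite /pi_separable; case=> n [f sf] ntG; have [f0 fn fS] := sf.
have exP: exists i, f i != 1%G by exists n; rewrite fn; apply: contra ntG => /eqP->.
case: (@ex_minnP (fun i => f i != 1%G) exP) => m ntm minm.
have m_gt0: 0 < m by case: m ntm {minm} => //; rewrite f0 eqxx.
have le_mn: m <= n by apply: minm; rewrite fn; apply: contra ntG => /eqP->.
have fm1: f m.-1 = 1%G.
  apply/eqP; apply/negPn/negP => ne; have := minm _ ne.
  by rewrite -ltnS prednK // ltnn.
exists (f m); first split.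
- move: le_mn; rewrite leq_eqVlt; case/orP=> [/eqP-> | lt_mn].
    by rewrite fn normal_refl.
  by case: (fS m lt_mn).
- by [].
have lt: m.-1 < n by rewrite prednK.
have [_ _ pq] := fS _ lt; move: pq; rewrite prednK // fm1.
by rewrite !qgroup_nat ?norm1 ?subsetT // indexg1.
Qed.

End Sep.

Lemma solJ (gT : finGroupType) (K : {group gT}) x : solvable K -> solvable (K :^ x).
Proof. by rewrite (isog_sol (conj_isog K x)). Qed.

Lemma sep_Hall_exists_subJ pi gT (G : {group gT}) :
  pi_separable pi G -> exists2 H : {group gT}, pi.-Hall(G) H
    & forall K : {group gT}, K \subset G -> pi.-group K -> solvable K ->
        exists2 x, x \in G & K \subset H :^ x.
Proof.
have [n] := ubnP #|G|; elim: n gT G => // n IHn gT G /ltnSE-leGn sepG.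
have [-> | ntG] := eqsVneq G 1.
  exists 1%G => [|K /trivGP-> _ _]; last by exists 1; rewrite ?set11 ?sub1G.
  by rewrite pHallE sub1G cards1 part_p'nat.
have [M [nsMG ntM] piM] := sep_min sepG ntG.
have sMG := normal_sub nsMG.
pose Gb := (G / M)%G; case: (IHn _ Gb) => [||Hb].
- by rewrite (leq_trans (ltn_quotient _ _)).
- exact: sep_quo.
case/and3P=> [sHbGb piHb pi'Hb'] transHb.
case: (inv_quotientS nsMG sHbGb) => H def_H sMH sHG.
have nMG := normal_norm nsMG; have nMH := subset_trans sHG nMG.
have transH (K : {group gT}):
  K \subset G -> pi.-group K -> solvable K -> exists2 x, x \in G & K \subset H :^ x.
- move=> sKG piK solK; have nMK := subset_trans sKG nMG.
  case: (transHb (K / M)%G) => [|||xb Gxb sKHxb]; first exact: morphimS.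
  + exact: morphim_pgroup.
  + exact: quotient_sol.
  case/morphimP: Gxb => x Nx Gx /= def_x; exists x => //.
  apply/subsetP=> y Ky.
  have: y \in coset M y by rewrite val_coset (subsetP nMK, rcoset_refl).
  have: coset M y \in (H :^ x) / M.
    rewrite /quotient morphimJ //=.
    by rewrite def_x def_H in sKHxb; apply/(subsetP sKHxb)/mem_quotient.
  case/morphimP=> z Nz Hxz ->.
  rewrite val_coset //; case/rcosetP=> t Mt ->; rewrite groupMl //.
  by rewrite mem_conjg (subsetP sMH) // -mem_conjg (normP Nx).
have pi'H': pi^'.-nat #|G : H|.
  move: pi'Hb'; rewrite -!divgS // def_H !card_quotient //.
  by rewrite -(divnMl (cardG_gt0 M)) !Lagrange.
case/orP: piM => [piM | pi'M].
  exists H => //; apply/and3P; split=> //; rewrite /pgroup.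
  by rewrite -(Lagrange sMH) -card_quotient // pnatM -def_H; apply/andP; split; [exact: piM | exact: piHb].
have [ltHG | leGH {n IHn leGn transH}] := ltnP #|H| #|G|.
  case: (IHn _ H (leq_trans ltHG leGn)) => [|H1]; first exact: sep_sub sepG sHG.
  case/and3P=> sH1H piH1 pi'H1' transH1.
  have sH1G: H1 \subset G by apply: subset_trans sHG.
  exists H1 => [|K sKG piK solK].
    apply/and3P; split => //.
    rewrite -divgS // -(Lagrange sHG) -(Lagrange sH1H) -mulnA.
    by rewrite mulKn // pnatM pi'H1'.
  case: (transH K sKG piK solK) => x Gx def_K.
  case: (transH1 (K :^ x^-1)%G) => [|||y Hy def_K1].
  - by rewrite sub_conjgV.
  - by rewrite /pgroup cardJg.
  - exact: solJ.
  exists (y * x); first by rewrite groupMr // (subsetP sHG).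
  by rewrite -(conjsgKV x K) conjsgM conjSg.
have eqHG: H = G.
  by apply/eqP; rewrite -val_eqE eqEcard sHG.
have hallM: pi^'.-Hall(G) M.
  rewrite /pHall sMG pi'M /= pnatNK -card_quotient //=.
  by rewrite -eqHG -def_H.
case/splitsP: (SchurZassenhaus_split (pHall_Hall hallM) nsMG) => H0.
case/complP=> trMH defG.
have sH0G: H0 \subset G by rewrite -defG mulG_subr.
exists H0 => [|K sKG piK solK].
  apply: etrans hallM; rewrite /pHall sMG sH0G /= -!divgS // -defG andbC.
  by rewrite (TI_cardMg trMH) mulKn ?mulnK // pnatNK.
pose G1 := (K <*> M)%G; pose K1 := (H0 :&: G1)%G.
have nMK: K \subset 'N(M) by apply: subset_trans sKG nMG.
have defG1: M * K = G1 by rewrite -normC -?norm_joinEl.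
have coMK: coprime #|M| #|K|.
  by rewrite coprime_sym (pnat_coprime piK) //; apply: (pHall_pgroup hallM).
have sK1: K1 \subset K <*> M by apply: subsetIr.
case: (SchurZassenhaus_trans_actsol solK nMK sK1 coMK) => [|x Mx defK1].
- apply/esym/eqP; rewrite -(eqn_pmul2l (cardG_gt0 M)) -TI_cardMg //; last first.
    by apply/trivgP; rewrite -trMH /= setIA subsetIl.
  rewrite -coprime_cardMg // defG1; apply/eqP; congr #|(_ : {set _})|.
  rewrite group_modl; last by rewrite -defG1 mulG_subl.
  by apply/setIidPr; rewrite defG gen_subG subUset sKG.
exists x^-1; first by rewrite groupV (subsetP sMG).
by rewrite -(_ : K1 :^ x^-1 = K) ?(conjSg, subsetIl) // defK1 conjsgK.
Qed.

Lemma quo_cent_index (gT : finGroupType) (G N : {group gT}) x :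
  N <| G -> x \in G ->
  #|G / N : 'C_(G / N)[coset N x]| %| #|G : 'C_G[x]|.
Proof.
move=> nsNG Gx; have nNG := normal_norm nsNG.
have sC: 'C_G[x] / N \subset 'C_(G / N)[coset N x].
  by rewrite subsetI quotientS ?subsetIl // quotient_cent1s ?subsetIr.
apply: dvdn_trans (indexgS _ sC) _.
by apply: index_quotient; rewrite (subset_trans (subsetIl _ _)).
Qed.

Lemma Hall_in_cent pi (gT : finGroupType) (G : {group gT}) x :
  pi_separable pi G -> x \in G -> pi^'.-nat #|G : 'C_G[x]| ->
  exists2 R : {group gT}, pi.-Hall(G) R & R \subset 'C_G[x].
Proof.
move=> sepG Gx pi'C.
have sCG: 'C_G[x] \subset G := subsetIl _ _.
have [R hallR _] := sep_Hall_exists_subJ (sep_sub sepG sCG).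
have [sRC piR pi'R] := and3P hallR.
exists R => //; apply/and3P; split => //; first exact: subset_trans sRC sCG.
by rewrite -(Lagrange_index sCG sRC) pnatM pi'C.
Qed.

Lemma normal_sub_Hall pi (gT : finGroupType) (G V R : {group gT}) :
  V <| G -> pi.-group V -> pi.-Hall(G) R -> V \subset R.
Proof.
move=> nsVG piV hallR; apply: subset_trans (pcore_sub_Hall hallR).
exact: pcore_max.
Qed.

Lemma cover_conj (gT : finGroupType) (M H : {group gT}) :
  M \subset H -> H \subset class_support M H -> M :=: H.
Proof.
move=> sMH sHc; apply/eqP; rewrite eqEsubset sMH /=.
rewrite -indexg_eq1 eqn_leq indexg_gt0 andbT.
have nM: M \subset 'N_H(M^#).
  by rewrite subsetI sMH; apply/normsP => y My; rewrite conjD1g (conjGid My).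
have c1: #|H^#| <= #|(class_support M H)^#|.
  by apply: subset_leq_card; apply: setSD.
rewrite class_supportD1 in c1.
have c2 := (leq_card_cover (M^# :^: H)).1.
have c3: \sum_(A in M^# :^: H) #|A| = (#|M^# :^: H| * #|M^#|)%N.
  rewrite -sum_nat_const; apply: eq_bigr => A /imsetP[y _ ->].
  by rewrite cardJg.
have c4: #|M^# :^: H| <= #|H : M|.
  by rewrite card_conjugates dvdn_leq ?indexg_gt0 // indexgS.
have eH: #|H^#| = #|H|.-1 by rewrite [#|H|](cardsD1 1) group1.
have eM: #|M^#| = #|M|.-1 by rewrite [#|M|](cardsD1 1) group1.
have c5 := leq_trans c1 (leq_trans c2 (eq_leq c3)).
rewrite eH eM in c5.
have c6 := leq_trans c5 (leq_mul c4 (leqnn #|M|.-1)).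
move: c6; rewrite -(Lagrange sMH).
have := cardG_gt0 M; have := indexg_gt0 H M.
move: #|H : M| #|M| => i m; case: m => // m _ _ /=.
move=> h; nia.
Qed.

Lemma memS (gT : finGroupType) (G V : {group gT}) h g :
  V <| G -> h \in G -> g \in G ->
  (g \in coset V @*^-1 'C[coset V h]) = ([~ h, g] \in V).
Proof.
move=> nsVG Gh Gg; have nVG := normal_norm nsVG.
have Nh := subsetP nVG h Gh; have Ng := subsetP nVG g Gg.
apply/morphpreP/idP => [[_ /cent1P c] | Vc].
  apply: coset_idr; first by rewrite groupR.
  by rewrite morphR //; apply/eqP/commgP; apply: commute_sym.
split => //; apply/cent1P; apply: commute_sym; apply/commgP/eqP.
rewrite -morphR //; exact: coset_id.
Qed.

Lemma core_abelian pi (gT : finGroupType) (G H V : {group gT}) :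
  pi_separable pi G -> pi.-Hall(G) H -> V <| G -> V \proper H ->
  H^`(1) \subset V ->
  (forall h, h \in H -> h \notin V -> pi^'.-nat #|G : 'C_G[h]|) -> abelian H.
Proof.
move=> sepG hallH nsVG ltVH dHV pi'H.
have [sHG piH _] := and3P hallH.
have sVH := proper_sub ltVH.
have piV : pi.-group V := pgroupS sVH piH.
have nVG := normal_norm nsVG.
have cVh: forall h v, h \in H -> h \notin V -> v \in V -> h \in 'C[v].
  move=> h v Hh nVh Vv; have Gh := subsetP sHG h Hh.
  have [R hallR sRC] := Hall_in_cent sepG Gh (pi'H h Hh nVh).
  have sVC := subset_trans (normal_sub_Hall nsVG piV hallR) (subset_trans sRC (subsetIr _ _)).
  by rewrite cent1C (subsetP sVC).
have [_ [x0 Hx0 nVx0]] := properP ltVH.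
have cHV: forall h v, h \in H -> v \in V -> h \in 'C[v].
  move=> h v Hh Vv; case Vh: (h \in V); last by apply: cVh; rewrite ?Vh.
  have nV: h * x0 \notin V by rewrite groupMl.
  have c1 := cVh _ _ (groupM Hh Hx0) nV Vv.
  have c2 := cVh _ _ Hx0 nVx0 Vv.
  by rewrite -(groupMr _ c2).
have abelV: abelian V.
  by apply/centsP => a Va b Vb; apply/cent1P; rewrite cent1C cHV ?(subsetP sVH).
have step3: forall h, h \in H -> h \notin V -> H \subset 'C[h].
  move=> h Hh nVh; have Gh := subsetP sHG h Hh.
  pose S := (G :&: coset V @*^-1 'C[coset V h])%G.
  have sSG : S \subset G by apply: subsetIl.
  have memS' g : g \in G -> (g \in S) = ([~ h, g] \in V).
    by move=> Gg; rewrite inE Gg /= (memS nsVG Gh Gg).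
  have sHS: H \subset S.
    apply/subsetP => y Hy; rewrite memS' ?(subsetP sHG) //.
    by apply: (subsetP dHV); rewrite derg1 mem_commg.
  have [K0 hallK0 _] := sep_Hall_exists_subJ (sep_neg (sep_sub sepG sSG)).
  have [sK0S pi'K0 _] := and3P hallK0.
  have sK0G := subset_trans sK0S sSG.
  have nVK0 := subset_trans sK0G nVG.
  have hkV k : k \in K0 -> [~ h, k] \in V.
    by move=> Kk; rewrite -memS' ?(subsetP sK0G) // (subsetP sK0S).
  have sJ: K0 :^ h \subset V * K0.
    apply/subsetP => z; rewrite mem_conjg => Kz.
    rewrite -(conjgKV h z) conjg_mulR -(normC nVK0) mem_mulg //.
    by rewrite -invgR groupV hkV.
  have coVK: coprime #|V| #|K0| := pnat_coprime piV pi'K0.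
  have [x Vx defK] := @SchurZassenhaus_trans_sol _ V K0 (K0 :^ h)%G (abelian_sol abelV) nVK0 sJ coVK (cardJg K0 h).
  pose y := h * x^-1.
  have Hx: x \in H := subsetP sVH x Vx.
  have Hy: y \in H by rewrite groupM ?groupV.
  have Gy := subsetP sHG y Hy.
  have nVy: y \notin V by rewrite groupMr ?groupV.
  have nK0y: y \in 'N(K0) by apply/normP; rewrite conjsgM defK conjsgK.
  have eqcy: coset V y = coset V h.
    have NVx: x^-1 \in 'N(V) by rewrite groupV (subsetP (normG V)).
    rewrite morphM ?(subsetP nVG h Gh) //.
    by rewrite (_ : coset_morphism V x^-1 = 1) ?mulg1 //; apply: coset_id; rewrite groupV.
  have cK0y: K0 \subset 'C[y].
    apply/subsetP => k Kk; have Gk := subsetP sK0G k Kk.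
    have c1: [~ y, k] \in K0 by rewrite commgEr groupMr // memJ_norm // groupV.
    have c2: [~ y, k] \in V.
      by rewrite -(memS nsVG Gy Gk) eqcy (memS nsVG Gh Gk) hkV.
    have: [~ y, k] \in V :&: K0 by rewrite inE c2.
    rewrite coprime_TIg // => /set1P/eqP/commgP c.
    by apply/cent1P; apply: commute_sym.
  have sCS: 'C_G[y] \subset S.
    apply/subsetP => g /setIP[Gg /cent1P cg]; rewrite memS' //.
    rewrite -(memS nsVG Gh Gg) -eqcy (memS nsVG Gy Gg).
    by move/commgP: (commute_sym cg) => /eqP->.
  have sK0C: K0 \subset 'C_G[y] by rewrite subsetI sK0G.
  have i1: pi^'.-nat #|S : 'C_G[y]|.
    exact: pnat_dvd (indexSg sCS sSG) (pi'H y Hy nVy).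
  have i2: pi.-nat #|S : 'C_G[y]|.
    by apply: pnat_dvd (indexgS _ sK0C) _; rewrite -pnatNK; case/and3P: hallK0.
  have sSC: S \subset 'C_G[y] by rewrite -indexg_eq1 (pnat_1 i2 i1).
  apply/subsetP => z Hz.
  have zy: z \in 'C[y] by apply: (subsetP (subset_trans sSC (subsetIr _ _))); apply: (subsetP sHS).
  have zx: z \in 'C[x] by apply: cHV.
  have ->: h = y * x by rewrite /y mulgKV.
  by rewrite cent1C groupM // cent1C.
apply/centsP => a Ha b Hb; apply/cent1P.
case Va: (a \in V); first by rewrite cent1C cHV.
by rewrite cent1C; apply: (subsetP (step3 a Ha (negbT Va))).
Qed.

Lemma allpi'_abelian pi (gT : finGroupType) (G H : {group gT}) :
  pi_separable pi G -> pi.-Hall(G) H ->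
  (forall h, h \in H -> pi^'.-nat #|G : 'C_G[h]|) -> abelian H.
Proof.
have [n] := ubnP #|G|; elim: n gT G H => // n IHn gT G H /ltnSE-leGn sepG hallH pi'H.
have [sHG piH _] := and3P hallH.
have [G1 | ntG] := eqsVneq G 1.
  by rewrite G1 in sHG; apply: abelianS sHG (abelian1 _).
have [V [nsVG ntV] piV] := sep_min sepG ntG.
have nVG := normal_norm nsVG; have nVH := subset_trans sHG nVG.
have hallHb := quotient_pHall nVH hallH.
have abHb: abelian (H / V).
  apply: (IHn _ (G / V)%G (H / V)%G) => //.
  - by rewrite (leq_trans (ltn_quotient _ _)) // normal_sub.
  - exact: sep_quo.
  move=> hb /morphimP[h Nh Hh ->].
  exact: pnat_dvd (quo_cent_index nsVG (subsetP sHG h Hh)) (pi'H h Hh).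
have dHV := der1_min nVH abHb.
case/orP: piV => [piV | pi'V].
  have sVH := normal_sub_Hall nsVG piV hallH.
  case ltVH: (V \proper H).
    by apply: core_abelian sepG hallH nsVG ltVH dHV _ => h Hh _; apply: pi'H.
  have eVH: H \subset V.
    by move: ltVH; rewrite properEneq sVH andbT => /negbFE/eqP->.
  apply/centsP => a Ha b Hb; apply/cent1P; rewrite cent1C.
  have [R hallR sRC] := Hall_in_cent sepG (subsetP sHG a Ha) (pi'H a Ha).
  have := subset_trans (subset_trans eVH (normal_sub_Hall nsVG piV hallR)) (subset_trans sRC (subsetIr _ _)).
  by move/subsetP; apply.
have TI := coprime_TIg (pnat_coprime piH pi'V).
apply/derG1P; apply/trivgP.
apply: subset_trans (_ : _ \subset H :&: V) _; first by rewrite subsetI der_sub dHV.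
by rewrite TI.
Qed.

Lemma abelian_pl1 pi (gT : finGroupType) (G H : {group gT}) :
  pi_separable pi G -> pi.-Hall(G) H -> abelian H ->
  exists N : {group gT}, exists L : {group gT},
    [/\ N <| G, L <| G, N \subset L, pi^'.-group N
      & pi.-nat #|L : N| /\ pi^'.-nat #|G : L|].
Proof.
have [n] := ubnP #|G|; elim: n gT G H => // n IHn gT G H /ltnSE-leGn sepG hallH abH.
have [sHG piH pi'GH] := and3P hallH.
have [G1 | ntG] := eqsVneq G 1.
  exists 1%G, G; split; rewrite ?normal1 ?normal_refl ?sub1G ?pgroup1 //.
  by rewrite G1 indexgg.
have [V [nsVG ntV] piV] := sep_min sepG ntG.
have nVG := normal_norm nsVG; have nVH := subset_trans sHG nVG.
have [||Nb [Lb [nsNb nsLb sNLb pi'Nb [piLN pi'GL]]]] := IHn _ (G / V)%G (H / V)%G _ (sep_quo sepG nsVG) (quotient_pHall nVH hallH).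
- by rewrite (leq_trans (ltn_quotient _ _)) // normal_sub.
- exact: quotient_abelian.
pose N := (coset V @*^-1 Nb)%G; pose L := (coset V @*^-1 Lb)%G.
have nsNG: N <| G by rewrite -(quotientGK nsVG) cosetpre_normal.
have nsLG: L <| G by rewrite -(quotientGK nsVG) cosetpre_normal.
have sNL: N \subset L by apply: morphpreS.
have iLN: #|L : N| = #|Lb : Nb| by apply: index_cosetpre.
have iGL: #|G : L| = #|G / V : Lb|.
  by rewrite -{1}(quotientGK nsVG) index_cosetpre.
have cN: #|N| = (#|V| * #|Nb|)%N by apply: card_cosetpre.
have sVN: V \subset N by apply: sub_cosetpre.
case/orP: piV => [piV | pi'V]; last first.
  exists N, L; split; rewrite ?iLN ?iGL //.
  by rewrite /pgroup cN pnatM; apply/andP; split; [exact: pi'V | exact: pi'Nb].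
have sVH := normal_sub_Hall nsVG piV hallH.
pose C := 'C_G(V).
have nsCG: C <| G by have := subcent_normal G V; rewrite (setIidPl nVG).
have sCG: C \subset G := subsetIl _ _.
have sHC: H \subset C by rewrite subsetI sHG (subset_trans abH) // centS.
pose D := (N :&: C)%G.
have sDN: D \subset N := subsetIl _ _.
have sNG := normal_sub nsNG.
have cVD: D \subset 'C(V) by rewrite (subset_trans (subsetIr _ _)) ?subsetIr.
have sVD: V \subset D.
  by rewrite subsetI sVN subsetI (normal_sub nsVG); exact: abelianS sVH abH.
have nsDG: D <| G by apply: normalI.
have iNV: #|N : V| = #|Nb| by rewrite -divgS // cN mulKn ?cardG_gt0.
have hallVD: pi.-Hall(D) V.
  apply/and3P; split => //; apply: pnat_dvd (indexSg sVD sDN) _.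
  by rewrite iNV.
have nsVD: V <| D by apply: normalS sVD (normal_sub nsDG) nsVG.
case/splitsP: (SchurZassenhaus_split (pHall_Hall hallVD) nsVD) => O0.
case/complP=> trVO defD.
have sOD: O0 \subset D by rewrite -defD mulG_subr.
have nsOD: O0 <| D.
  rewrite /normal sOD -defD mul_subG ?normG // cents_norm //.
  by rewrite centsC (subset_trans sOD) ?cVD.
have cD: #|D| = (#|V| * #|O0|)%N by rewrite -defD TI_cardMg.
have hallOD: pi^'.-Hall(D) O0.
  apply/and3P; split => //.
    rewrite /pgroup; apply: pnat_dvd (_ : #|O0| %| #|D : V|) _.
      by rewrite -divgS // cD mulKn ?cardG_gt0.
    by case/and3P: hallVD.
  by rewrite pnatNK -divgS // cD mulnK ?cardG_gt0.
have eO := normal_Hall_pcore hallOD nsOD.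
have nsOG: 'O_pi^'(D) <| G := char_normal_trans (pcore_char _ _) nsDG.
pose L' := (L :&: C)%G.
have sL'C: L' \subset C := subsetIr _ _.
have sDL': D \subset L' by apply: setSI.
exists ('O_pi^'(D))%G, L'; split.
- exact: nsOG.
- exact: normalI.
- exact: subset_trans (pcore_sub _ _) sDL'.
- exact: pcore_pgroup.
split.
- rewrite -(Lagrange_index sDL' (pcore_sub _ _)) pnatM.
  apply/andP; split; last by rewrite /= eO -pnatNK; case/and3P: hallOD.
  have ->: D :=: L' :&: N.
    apply/eqP; rewrite eqEsubset; apply/andP; split; apply/subsetP => z.
      case/setIP => Nz Cz; apply/setIP; split => //; apply/setIP; split => //.
      exact: (subsetP sNL z Nz).
    by case/setIP => /setIP[_ Cz] Nz; apply/setIP; split.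
  rewrite indexgI -card_quotient; last first.
    exact: subset_trans (subsetIl _ _) (subset_trans (normal_sub nsLG) (normal_norm nsNG)).
  apply: pnat_dvd piLN; rewrite -iLN -card_quotient; last first.
    exact: subset_trans (normal_sub nsLG) (normal_norm nsNG).
  by rewrite cardSg // quotientS // subsetIl.
rewrite -(Lagrange_index sCG sL'C) pnatM.
apply/andP; split; first exact: pnat_dvd (indexgS _ sHC) pi'GH.
have ->: #|'C_G(V)%G : L'| = #|C : L| by rewrite /= (setIC (gval L)) indexgI.
rewrite -card_quotient; last exact: subset_trans sCG (normal_norm nsLG).
apply: pnat_dvd pi'GL; rewrite -iGL -card_quotient ?normal_norm //.
by rewrite cardSg // quotientS.
Qed.

Lemma pl1_length pi (gT : finGroupType) (G N L : {group gT}) :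
  N <| G -> L <| G -> N \subset L -> pi^'.-group N -> pi.-nat #|L : N| ->
  pi^'.-nat #|G : L| -> pi_length_le pi G 1.
Proof.
move=> nsNG nsLG sNL pi'N piLN pi'GL.
have sLG := normal_sub nsLG.
have e0: pi^'.-group (N / 1) by rewrite qgroup_nat ?norm1 ?subsetT // indexg1.
have e1: pi.-group (L / N) by rewrite qgroup_nat // (subset_trans sLG) ?normal_norm.
have e2: pi^'.-group (G / L) by rewrite qgroup_nat ?normal_norm.
exists 3, (fun i => match i with 0 => 1%G | 1 => N | 2 => L | _ => G end).
split.
  split => // -[|[|[|i]]] //= _.
  - by rewrite normal1 sub1G e0 orbT.
  - by rewrite nsNG sNL e1.
  - by rewrite nsLG sLG e2 orbT.
by rewrite /= e0 e2 /=; case: (~~ _).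
Qed.

Lemma order_quo_pi' pi (gT : finGroupType) (H : {group gT}) z :
  pi.-group H -> z \in 'N(H) -> pi^'.-elt z -> #[coset H z] = #[z].
Proof.
move=> piH Nz pi'z.
rewrite /order -quotient_cycle // card_quotient ?cycle_subG //.
rewrite -indexgI (coprime_TIg (_ : coprime #|<[z]>| #|H|)) ?indexg1 //.
by rewrite coprime_sym (pnat_coprime piH pi'z).
Qed.

Lemma glaub_cyc pi (gT : finGroupType) (G H : {group gT}) x k :
  H <| G -> pi.-Hall(G) H -> x \in H -> pi.-nat #|G : 'C_G[x]| -> k \in G ->
  pi^'.-elt k -> exists2 h, h \in H & x ^ h \in 'C[k].
Proof.
move=> nsHG hallH Hx piC Gk pi'k.
have [sHG piH pi'GH] := and3P hallH.
have nHG := normal_norm nsHG.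
have Gx := subsetP sHG x Hx.
have sCG: 'C_G[x] \subset G := subsetIl _ _.
have defG: 'C_G[x] * H = G := coprime_index_mulG sCG sHG (pnat_coprime piC pi'GH).
have: k \in 'C_G[x] * H by rewrite defG.
case/mulsgP => c h0 Cc Hh0 defk.
pose c' := c.`_pi^'.
have Cc': c' \in 'C_G[x].
  by apply: (subsetP _ _ (cycle_constt _ c)); rewrite cycle_subG.
have Gc := subsetP sCG c Cc; have Gc' := subsetP sCG c' Cc'.
have Nk := subsetP nHG k Gk; have Nc := subsetP nHG c Gc.
have Nc' := subsetP nHG c' Gc'; have Nh0 := subsetP nHG h0 (subsetP sHG h0 Hh0).
have qc: coset H c = coset H k.
  by rewrite defk morphM // (_ : coset_morphism H h0 = 1) ?mulg1 //; apply: coset_id.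
have qc': coset H c' = coset H k.
  rewrite /c' morph_constt // -[coset_morphism H c]/(coset H c) qc constt_p_elt //.
  exact: morph_p_elt.
have oc: #[k] = #[c'].
  rewrite -(order_quo_pi' piH Nk pi'k) -(order_quo_pi' piH Nc' (p_elt_constt _ _)).
  by rewrite qc'.
have solK: solvable <[k]> by apply: abelian_sol; apply: cycle_abelian.
have nHK: <[k]> \subset 'N(H) by rewrite cycle_subG.
have sB: <[c']> \subset <[k]> <*> H.
  rewrite cycle_subG; apply: (subsetP _ _ (cycle_constt _ c)); rewrite cycle_subG.
  have ->: c = k * h0^-1 by rewrite defk mulgK.
  rewrite groupM ?groupV //; first by rewrite (subsetP (joing_subl _ _)) // cycle_id.
  by rewrite (subsetP (joing_subr _ _)).
have coHK: coprime #|H| #|<[k]>| by apply: pnat_coprime piH pi'k.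
have [y Hy defB] := SchurZassenhaus_trans_actsol solK nHK sB coHK oc.
exists y^-1; first by rewrite groupV.
have kyC: k ^ y \in 'C_G[x].
  have sc: <[c']> \subset 'C_G[x] by rewrite cycle_subG.
  by apply: (subsetP sc); rewrite defB memJ_conjg cycle_id.
by rewrite -mem_conjg -cent1J cent1C (subsetP (subsetIr _ _) _ kyC).
Qed.

Lemma pitype_core pi (gT : finGroupType) (G H : {group gT}) x :
  pi.-Hall(G) H -> x \in H -> pi.-nat #|G : 'C_G[x]| -> x \in 'O_pi(G).
Proof.
move=> hallH Hx piC; have [sHG piH pi'GH] := and3P hallH.
have Gx := subsetP sHG x Hx.
have sCG: 'C_G[x] \subset G := subsetIl _ _.
have defG: 'C_G[x] * H = G := coprime_index_mulG sCG sHG (pnat_coprime piC pi'GH).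
have sxH: x ^: G \subset H.
  apply/subsetP => _ /imsetP[g Gg ->].
  move: Gg; rewrite -defG => /mulsgP[c h Cc Hh ->].
  rewrite conjgM (_ : x ^ c = x) ?groupJ //.
  apply/conjg_fixP; apply/commgP; apply: commute_sym; apply/cent1P.
  exact: (subsetP (subsetIr _ _) c Cc).
have nsX: <<x ^: G>> <| G.
  rewrite /normal gen_subG (normal_sub (class_normal Gx)).
  exact: subset_trans (normal_norm (class_normal Gx)) (norm_gen _).
have piX: pi.-group <<x ^: G>> by apply: pgroupS piH; rewrite gen_subG.
apply: (subsetP (pcore_max piX nsX)).
by apply: mem_gen; apply: class_refl.
Qed.

Unset Implicit Arguments.

Theorem mainTheorem11 (gT : finGroupType) (G : {group gT}) (pi : nat_pred) :
  pi_separable pi G ->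
  [<-> (forall x, x \in G -> pi.-elt x ->
          pi.-nat #|G : 'C_G[x]| \/ pi^'.-nat #|G : 'C_G[x]|);
       pi_decomposable pi G \/
         ((exists H : {group gT}, pi.-Hall(G) H /\ abelian H) /\ pi_length_le pi G 1);
       (forall x, x \in G -> pi.-elt x -> pi.-nat #|G : 'C_G[x]|) \/
         (forall x, x \in G -> pi.-elt x -> pi^'.-nat #|G : 'C_G[x]|)].
Proof.
move=> sepG.
have [H hallH transH] := sep_Hall_exists_subJ sepG.
have [K hallK _] := sep_Hall_exists_subJ (sep_neg sepG).
have [sHG piH pi'GH] := and3P hallH.
have [sKG pi'K piGK] := and3P hallK.
have plen: abelian H -> pi_length_le pi G 1.
  move=> abH; have [N [L [nsNG nsLG sNL pi'N [piLN pi'GL]]]] := abelian_pl1 sepG hallH abH.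
  exact: pl1_length nsNG nsLG sNL pi'N piLN pi'GL.
tfae.
- move=> P1.
  have P1H z : z \in H -> pi.-nat #|G : 'C_G[z]| \/ pi^'.-nat #|G : 'C_G[z]|.
    by move=> Hz; apply: P1; [exact: (subsetP sHG) | exact: mem_p_elt piH Hz].
  have nsPG := pcore_normal pi G.
  have sPH := pcore_sub_Hall hallH.
  case sHP: (H \subset 'O_pi(G)); last first.
    have ltPH: 'O_pi(G) \proper H by rewrite properEneq sPH andbT; apply: contraFneq sHP => <-.
    have pi'T h : h \in H -> h \notin 'O_pi(G) -> pi^'.-nat #|G : 'C_G[h]|.
      move=> Hh nPh; case: (P1H h Hh) => // piC.
      by case/negP: nPh; apply: pitype_core hallH Hh piC.
    have nPH := subset_trans sHG (normal_norm nsPG).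
    have abHb: abelian (H / 'O_pi(G)).
      apply: allpi'_abelian (sep_quo sepG nsPG) (quotient_pHall nPH hallH) _.
      move=> hb /morphimP[h Nh Hh ->].
      case Ph: (h \in 'O_pi(G)).
        rewrite (_ : coset_morphism _ h = 1); last exact: coset_id.
        by rewrite cent11T setIT indexgg.
      exact: pnat_dvd (quo_cent_index nsPG (subsetP sHG h Hh)) (pi'T h Hh (negbT Ph)).
    have dHP := der1_min nPH abHb.
    have abH := core_abelian sepG hallH nsPG ltPH dHP pi'T.
    by right; split; [exists H | exact: plen].
  have eHP: 'O_pi(G) :=: H by apply/eqP; rewrite eqEsubset sHP sPH.
  have nsHG: H <| G by rewrite -eHP.
  have cZ z : z \in H -> pi^'.-nat #|G : 'C_G[z]| -> H \subset 'C[z].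
    move=> Hz pi'C; have [R hallR sRC] := Hall_in_cent sepG (subsetP sHG z Hz) pi'C.
    exact: subset_trans (normal_sub_Hall nsHG piH hallR) (subset_trans sRC (subsetIr _ _)).
  case abH: (abelian H); first by right; split; [exists H | exact: plen].
  left.
  have cHk k : k \in K -> H \subset 'C[k].
    move=> Kk; have Gk := subsetP sKG k Kk; have pi'k := mem_p_elt pi'K Kk.
    pose M := ('Z(H) <*> 'C_H[k])%G.
    have sMH: M \subset H by rewrite join_subG center_sub subsetIl.
    have cov: H \subset class_support M H.
      apply/subsetP => z Hz; case: (P1H z Hz) => [piz | pi'z].
        have [h Hh zh] := glaub_cyc nsHG hallH Hz piz Gk pi'k.
        rewrite -(conjgK h z); apply: memJ_class_support; last by rewrite groupV.
        by rewrite (subsetP (joing_subr _ _)) // inE groupJ.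
      apply: mem_class_support; rewrite (subsetP (joing_subl _ _)) //.
      by rewrite inE Hz -sub_cent1 cZ.
    have eM := cover_conj sMH cov.
    have nCH: H \subset 'N('C_H[k]).
      rewrite -{1}eM /= join_subG normG andbT cents_norm //.
      by rewrite (subset_trans (subsetIr _ _)) // centS // subsetIl.
    have piinC z : z \in H -> pi.-nat #|G : 'C_G[z]| -> z \in 'C_H[k].
      move=> Hz piz; have [h Hh zh] := glaub_cyc nsHG hallH Hz piz Gk pi'k.
      have zhC: z ^ h \in 'C_H[k] by rewrite inE groupJ.
      by rewrite -(memJ_norm _ (subsetP nCH h Hh)).
    have [a Ha naC]: exists2 a, a \in H & a \notin 'C(H).
      apply/exists_inP; rewrite -negb_forall_in; apply: contraFN abH => /forall_inP cH.
      by apply/subsetP => a Ha; apply: cH.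
    have pia: pi.-nat #|G : 'C_G[a]|.
      case: (P1H a Ha) => // pi'a; case/negP: naC.
      by rewrite -sub_cent1 cZ.
    have Ca := piinC a Ha pia.
    apply/subsetP => z Hz.
    suff: z \in 'C_H[k] by case/setIP.
    case: (P1H z Hz) => [piz | pi'z]; first exact: piinC.
    have Haz: a * z \in H by rewrite groupM.
    case: (P1H _ Haz) => [piaz | pi'az].
      by rewrite -(groupMl _ Ca) piinC.
    case/negP: naC; rewrite -sub_cent1.
    apply/subsetP => y Hy; have c1 := subsetP (cZ _ Haz pi'az) y Hy.
    have c2 := subsetP (cZ _ Hz pi'z) y Hy.
    by rewrite cent1C -(mulgK z a) groupM ?groupV // cent1C.
  have cKH: K \subset 'C(H) by apply/subsetP => k Kk; rewrite -sub_cent1 cHk.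
  have coHK: coprime #|G : H| #|G : K| by rewrite coprime_sym (pnat_coprime _ pi'GH) // -pnatNK.
  have defG: H * K = G := coprime_index_mulG sHG sKG coHK.
  have nsKG: K <| G.
    rewrite /normal sKG -defG mul_subG ?normG // cents_norm //.
    by rewrite centsC.
  have eQ := normal_Hall_pcore hallK nsKG.
  rewrite /pi_decomposable eHP eQ dprodE //.
  by apply: coprime_TIg; apply: pnat_coprime piH pi'K.
- case=> [dec | [[A [hallA abA]] _]].
    left => x Gx pix.
    have [_ defPQ cPQ tiPQ] := dprodP dec.
    pose P := 'O_pi(G); pose Q := 'O_pi^'(G).
    have cardG: #|G| = (#|P| * #|Q|)%N by rewrite -defPQ TI_cardMg.
    have hallP: pi.-Hall(G) P.
      apply/and3P; split; [exact: pcore_sub | exact: pcore_pgroup |].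
      rewrite -divgS ?pcore_sub // cardG mulKn ?cardG_gt0 //.
      exact: pcore_pgroup.
    have Px: x \in P by rewrite (mem_normal_Hall hallP (pcore_normal _ _)).
    have sQC: Q \subset 'C_G[x].
      rewrite subsetI pcore_sub sub_cent1.
      by apply: (subsetP _ x Px); rewrite centsC.
    apply: pnat_dvd (indexgS _ sQC) _.
    rewrite -divgS ?pcore_sub // cardG mulnK ?cardG_gt0 //.
    exact: pcore_pgroup.
  right => x Gx pix.
  have [z Gz sAH] := transH A (pHall_sub hallA) (pHall_pgroup hallA) (abelian_sol abA).
  have eA: A :=: H :^ z.
    apply/eqP; rewrite eqEcard sAH cardJg (card_Hall hallA) (card_Hall hallH) leqnn.
    by [].
  have abH: abelian H by rewrite -(abelianJ _ z) -eA.
  have solX: solvable <[x]> by apply: abelian_sol; apply: cycle_abelian.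
  have sXG: <[x]> \subset G by rewrite cycle_subG.
  have [w Gw sXH] := transH <[x]>%G sXG pix solX.
  have hallB: pi.-Hall(G) (H :^ w) by rewrite pHallJ.
  have abB: abelian (H :^ w) by rewrite abelianJ.
  have Bx: x \in H :^ w by rewrite (subsetP sXH) // cycle_id.
  have sBC: H :^ w \subset 'C_G[x].
    by rewrite subsetI (pHall_sub hallB) sub_cent1 (subsetP abB x Bx).
  by apply: pnat_dvd (indexgS _ sBC) _; case/and3P: hallB.
- by case=> P x Gx pix; [left | right]; apply: P.
Qed.
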